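(* Let $(W,S)$ be a Coxeter system of rank $n$ and $\mathbf{s}\in S^*$. Let $\sigma=\sigma_q\circ\cdots\circ\sigma_1$ be a sequence of braid-moves applied successively to $\mathbf{s}$, where $\sigma_i$ replaces a consecutive subword $\mathbf{b}^i_{x_iy_i}$ by $\mathbf{b}^i_{y_ix_i}$ ($x_i,y_i\in S$). Suppose that for every $i\in\{1,\dots,q-1\}$ the last letter (as an occurrence in the current word) of $\mathbf{b}^i_{y_ix_i}$ is the first letter of $\mathbf{b}^{i+1}_{x_{i+1}y_{i+1}}$. Then $\omega(\sigma(\mathbf{s}))=\omega(\mathbf{s})$, and there are reflections $r_1,r_2\in R_n$ with \[ \omega_n(\sigma(\mathbf{s}))=\omega_n(\mathbf{s})\cdot r_1\cdot r_2. \]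
   Context: $W=\langle S\mid s_i^2=(s_is_j)^{m_{ij}}=1\rangle$; $\omega:S^*\to W$ and $\omega_n:S^*\to W_n$ are the canonical surjections, where $W_n$ is the universal Coxeter group on $S$ (only relations $s_i^2=1$) and $R_n$ its set of reflections (conjugates of elements of $S$ in $W_n$). For finite $m_{xy}$, $\mathbf{b}_{xy}$ is the alternating word in $x,y$ of length $m_{xy}$ starting with $x$; a braid-move replaces a consecutive subword $\mathbf{b}_{xy}$ by $\mathbf{b}_{yx}$. *)

(* Defs.v *)
From mathcomp Require Import all_boot.
From Stdlib Require Import Relation_Operators.
Set Implicit Arguments. Unset Strict Implicit. Unset Printing Implicit Defensive.

(* A Coxeter matrix on a finite generating set S: m x y = Some k means
   m_xy = k, and None means m_xy = infinity. *)
Definition coxeter_matrix (S : finType) (m : S -> S -> option nat) : Prop :=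
  (forall x, m x x = Some 1%N) /\
  (forall x y, m x y = m y x) /\
  (forall x y, x != y -> forall k, m x y = Some k -> (2 <= k)%N).

Definition alt_word (S : Type) (x y : S) (k : nat) : seq S :=
  mkseq (fun i => if odd i then y else x) k.

(* One elementary use of a defining relator (s_x s_y)^{m_xy} = 1
   (for x = y this is s_x^2 = 1, since m_xx = 1). *)
Inductive cox_step (S : finType) (m : S -> S -> option nat) : seq S -> seq S -> Prop :=
| CoxStep u v x y k : m x y = Some k ->
    cox_step m (u ++ alt_word x y (2 * k) ++ v) (u ++ v).

(* Equality in the Coxeter group W presented by m:
   omega(a) = omega(b)  iff  cox_eq m a b.  (Since all generators are
   involutions, the group presentation coincides with the monoid one.) *)
Definition cox_eq (S : finType) (m : S -> S -> option nat) : seq S -> seq S -> Prop :=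
  clos_refl_sym_trans (seq S) (cox_step m).

(* The Coxeter matrix of the universal Coxeter group W_n: only s^2 = 1. *)
Definition univ_matrix (S : finType) (x y : S) : option nat :=
  if x == y then Some 1%N else None.

(* A word representing a conjugate  u s u^{-1}  of a generator s, i.e. a
   representative of a reflection. *)
Definition refl_word (S : Type) (u : seq S) (t : S) : seq S := u ++ t :: rev u.

(* w' is obtained from w by the braid-move replacing the consecutive
   subword b_xy = alt_word x y k at position p (0-based) by b_yx,
   where k = m_xy is finite. *)
Definition braid_move (S : finType) (m : S -> S -> option nat)
    (w : seq S) (p : nat) (x y : S) (k : nat) (w' : seq S) : Prop :=
  [/\ m x y = Some k, (p + k <= size w)%N,
      take k (drop p w) = alt_word x y k
    & w' = take p w ++ alt_word y x k ++ drop (p + k) w].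

(* Main.v *)
Require Import Defs.
From mathcomp Require Import all_boot zify.
From Stdlib Require Import Relation_Operators.

Lemma alt_cons (S : Type) (x y : S) k : alt_word x y k.+1 = x :: alt_word y x k.
Proof.
rewrite /alt_word /mkseq /= -[1]/(1 + 0) iotaDl -map_comp; congr (_ :: _).
by apply: eq_map => i /=; rewrite add0n; case: (odd i).
Qed.

Lemma alt_rcons (S : Type) (x y : S) k :
  alt_word x y k.+1 = rcons (alt_word x y k) (if odd k then y else x).
Proof. by rewrite /alt_word mkseqS. Qed.

Lemma alt_rev (S : Type) (x y : S) k :
  alt_word x y k ++ rev (alt_word y x k) = alt_word x y (2 * k).
Proof.
elim: k x y => [|k IH] x y //.
have -> : 2 * k.+1 = (2 * k).+2 by rewrite mulnS.
rewrite (alt_cons _ x y (2 * k).+1) (alt_rcons _ y x (2 * k)) mul2n odd_double -cats1 -mul2n.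
rewrite !alt_cons rev_cons -cats1 catA /= IH //.
Qed.

Section T.
Context (S : finType) (m : S -> S -> option nat).

Lemma ceq_refl a : cox_eq m a a. Proof. exact: rst_refl. Qed.
Lemma ceq_sym a b : cox_eq m a b -> cox_eq m b a. Proof. exact: rst_sym. Qed.
Lemma ceq_trans a b c : cox_eq m a b -> cox_eq m b c -> cox_eq m a c.
Proof. exact: rst_trans. Qed.

Lemma ceq_cong a b u v : cox_eq m a b -> cox_eq m (u ++ a ++ v) (u ++ b ++ v).
Proof.
induction 1.
- apply: rst_step; case: H => u' v' x0 y0 k hk.
  have -> : u ++ (u' ++ alt_word x0 y0 (2 * k) ++ v') ++ v =
            (u ++ u') ++ alt_word x0 y0 (2 * k) ++ (v' ++ v) by rewrite !catA.
  have -> : u ++ (u' ++ v') ++ v = (u ++ u') ++ (v' ++ v) by rewrite !catA.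
  by constructor.
- exact: ceq_refl.
- exact: ceq_sym.
- exact: ceq_trans IHclos_refl_sym_trans1 IHclos_refl_sym_trans2.
Qed.

Lemma ceq_xx (hm : forall x, m x x = Some 1) u v x :
  cox_eq m (u ++ [:: x; x] ++ v) (u ++ v).
Proof. apply: rst_step; exact: (CoxStep u v (hm x)). Qed.

Lemma ceq_wrev (hm : forall x, m x x = Some 1) w u v :
  cox_eq m (u ++ w ++ rev w ++ v) (u ++ v).
Proof.
elim: w u v => [|a w IH] u v /=; first exact: ceq_refl.
have -> : u ++ a :: w ++ rev (a :: w) ++ v = rcons u a ++ w ++ rev w ++ (a :: v).
  by rewrite rev_cons -!cats1 -!catA.
apply: ceq_trans (IH _ _) _.
rewrite -cats1 -catA /=; exact: ceq_xx.
Qed.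

Lemma ceq_wrev' (hm : forall x, m x x = Some 1) L w u v :
  L = u ++ w ++ rev w ++ v -> cox_eq m L (u ++ v).
Proof. by move=> ->; apply: ceq_wrev. Qed.

Lemma ceq_revw' (hm : forall x, m x x = Some 1) L w u v :
  L = u ++ rev w ++ w ++ v -> cox_eq m L (u ++ v).
Proof. by move=> ->; rewrite -{2}(revK w); apply: ceq_wrev. Qed.

Lemma ceq_braid (hm : forall x, m x x = Some 1) u v x y k :
  m x y = Some k -> cox_eq m (u ++ alt_word x y k ++ v) (u ++ alt_word y x k ++ v).
Proof.
move=> hk.
have h1 : cox_eq m (u ++ alt_word x y (2 * k) ++ (alt_word y x k ++ v)) (u ++ alt_word y x k ++ v).
  by apply: rst_step; constructor.
eapply ceq_trans; last exact: h1. apply: ceq_sym.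
have := (@ceq_revw' hm (u ++ alt_word x y (2 * k) ++ alt_word y x k ++ v) (alt_word y x k) (u ++ alt_word x y k) v).
rewrite -!catA; apply.
by rewrite -alt_rev -!catA.
Qed.
End T.
Arguments ceq_refl {S m} a.
Arguments ceq_sym {S m a b}.
Arguments ceq_trans {S m a b c}.
Arguments ceq_cong {S m a b} u v.
Lemma ceq_wrevE (S : finType) (m : S -> S -> option nat) (hm : forall x, m x x = Some 1)
  w u v L R : L = u ++ w ++ rev w ++ v -> R = u ++ v -> cox_eq m L R.
Proof. by move=> -> ->; apply: ceq_wrev. Qed.
Lemma ceq_revwE (S : finType) (m : S -> S -> option nat) (hm : forall x, m x x = Some 1)
  w u v L R : L = u ++ rev w ++ w ++ v -> R = u ++ v -> cox_eq m L R.
Proof. by move=> -> ->; rewrite -{2}(revK w); apply: ceq_wrev. Qed.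

Lemma ceq_congl (S : finType) (m : S -> S -> option nat) a b v :
  cox_eq m a b -> cox_eq m (a ++ v) (b ++ v).
Proof. by move=> h; have := ceq_cong [::] v h. Qed.

Lemma ceq_congr (S : finType) (m : S -> S -> option nat) a b u :
  cox_eq m a b -> cox_eq m (u ++ a) (u ++ b).
Proof. by move=> h; have := ceq_cong u [::] h; rewrite !cats0. Qed.

Arguments ceq_congl {S m a b} v.
Arguments ceq_congr {S m a b} u.

Lemma step_lemma (S : finType) (m : S -> S -> option nat)
  (hm : forall x, m x x = Some 1) X a M V T z :
  cox_eq m (X ++ a :: M ++ V) (T ++ rev (M ++ V) ++ a :: M ++ V) ->
  cox_eq m (X ++ M ++ z :: V) (T ++ rev V ++ z :: V).
Proof.
move=> h.
have hX : cox_eq m X (T ++ rev (M ++ V)).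
  have e1 : cox_eq m (X ++ (a :: M ++ V) ++ rev (a :: M ++ V) ++ [::]) (X ++ [::]).
    exact: ceq_wrev.
  rewrite !cats0 in e1.
  apply: ceq_trans (ceq_sym e1) _.
  rewrite catA.
  apply: ceq_trans (ceq_congl _ h) _.
  have := (@ceq_wrev' _ _ hm ((T ++ rev (M ++ V) ++ a :: M ++ V) ++ rev (a :: M ++ V)) (a :: M ++ V) (T ++ rev (M ++ V)) [::]).
  rewrite !cats0; apply.
  by rewrite -?catA /= -?catA.
have := ceq_congl (M ++ z :: V) hX => h2.
apply: ceq_trans h2 _.
apply: (@ceq_revwE _ _ hm M (T ++ rev V) (z :: V)).
  by rewrite rev_cat -!catA.
by rewrite -?catA /= -?catA.
Qed.

Lemma base_lemma (S : finType) (m : S -> S -> option nat)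
  (hm : forall x, m x x = Some 1) X x M V z :
  cox_eq m (X ++ M ++ z :: V)
    ((X ++ x :: M ++ V) ++ refl_word (rev V ++ rev M) x ++ rev V ++ z :: V).
Proof.
apply: ceq_sym.
apply: (ceq_trans (b := (X ++ x :: M) ++ rev M ++ x :: M ++ V ++ rev V ++ z :: V)).
  apply: (@ceq_wrevE _ _ hm V (X ++ x :: M) (rev M ++ x :: M ++ V ++ rev V ++ z :: V)) => //.
  by rewrite /refl_word rev_cat !revK -!catA /= -?catA.
apply: (ceq_trans (b := (X ++ [:: x]) ++ x :: M ++ V ++ rev V ++ z :: V)).
  by apply: (@ceq_wrevE _ _ hm M (X ++ [:: x]) (x :: M ++ V ++ rev V ++ z :: V)); rewrite -?catA /= -?catA.
apply: (ceq_trans (b := X ++ M ++ V ++ rev V ++ z :: V)).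
  by apply: (@ceq_wrevE _ _ hm [:: x] X (M ++ V ++ rev V ++ z :: V)); rewrite -?catA /= -?catA.
by apply: (@ceq_wrevE _ _ hm V (X ++ M) (z :: V)); rewrite -?catA /= -?catA.
Qed.

Lemma move_dec (S : finType) (m : S -> S -> option nat) w p x y k w' :
  braid_move m w p x y k w' -> 0 < k ->
  exists X M V z, [/\ w = X ++ alt_word x y k ++ V, w' = X ++ alt_word y x k ++ V,
    alt_word x y k = x :: M, alt_word y x k = M ++ [:: z] &
    size X = p /\ size M = k.-1].
Proof.
case=> hk hsz htk ->; case: k hk hsz htk => // k hk hsz htk _.
exists (take p w), (alt_word y x k), (drop (p + k.+1) w), (if odd k then x else y).
split => //.
- rewrite -htk.
  have e : drop p w = take k.+1 (drop p w) ++ drop (p + k.+1) w.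
    by rewrite -{1}(cat_take_drop k.+1 (drop p w)) drop_drop addnC.
  by rewrite -e cat_take_drop.
- exact: alt_cons.
- by rewrite alt_rcons cats1.
- split; last by rewrite size_mkseq.
  apply: size_takel; apply: leq_trans hsz; exact: leq_addr.
Qed.

Arguments move_dec {S m w p x y k w'}.

Theorem mainTheorem8 (n : nat) (m : 'I_n -> 'I_n -> option nat)
    (s : seq 'I_n) (q : nat)
    (ws : nat -> seq 'I_n) (p : nat -> nat) (x y : nat -> 'I_n) (k : nat -> nat) :
  coxeter_matrix m ->
  ws 0 = s ->
  (forall i, (i < q)%N -> braid_move m (ws i) (p i) (x i) (y i) (k i) (ws i.+1)) ->
  (forall i, (i.+1 < q)%N -> p i.+1 = (p i + k i).-1) ->
  cox_eq m (ws q) s /\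
  exists (u1 u2 : seq 'I_n) (t1 t2 : 'I_n),
    cox_eq (@univ_matrix _) (ws q) (s ++ refl_word u1 t1 ++ refl_word u2 t2).
Proof.
move=> hcm h0 hmv hp.
have hm : forall z, m z z = Some 1 by case: hcm.
have hu : forall z : 'I_n, univ_matrix z z = Some 1.
  by move=> z; rewrite /univ_matrix eqxx.
have kpos : forall i, i < q -> 0 < k i.
  move=> i hi; case: (hmv i hi) => hk _ _ _.
  case: (eqVneq (x i) (y i)) => [e | ne].
    by move: hk; rewrite e hm => -[<-].
  case: hcm => _ [_ h]; exact: leq_trans (h _ _ ne _ hk).
split.
  suff: forall j, j <= q -> cox_eq m (ws j) s by apply.
  elim => [|j IH] hj; first by rewrite h0; exact: ceq_refl.
  apply: ceq_trans _ (IH (ltnW hj)).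
  have [X [M [V [z [e1 e2 _ _ _]]]]] := move_dec (hmv j hj) (kpos j hj).
  case: (hmv j hj) => hk _ _ _.
  rewrite e1 e2; apply: ceq_sym; exact: ceq_braid.
case: q hmv hp kpos => [|q] hmv hp kpos.
  exists [::], [::], (x 0), (x 0); rewrite h0 /refl_word /= -[rev [::]]/[::].
  apply: ceq_sym; have := @ceq_xx _ _ hu s [::] (x 0); by rewrite !cats0.
have [X0 [M0 [V0 [z0 [e1 e2 a1 a2 [s1 s2]]]]]] := move_dec (hmv 0 isT) (kpos 0 isT).
have hs : s = X0 ++ x 0 :: M0 ++ V0 by rewrite -h0 e1 a1.
have claim : forall j, j < q.+1 -> exists X z V, [/\ ws j.+1 = X ++ z :: V,
    size X = (p j + k j).-1 &
    cox_eq (@univ_matrix _) (ws j.+1)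
      (s ++ refl_word (rev V0 ++ rev M0) (x 0) ++ rev V ++ z :: V)].
  elim => [|j IH] hj.
    exists (X0 ++ M0), z0, V0; split.
    - by rewrite e2 a2 -!catA.
    - have := kpos 0 isT; rewrite size_cat s1 s2; lia.
    - rewrite e2 a2 -catA hs; exact: base_lemma.
  have [X [z [V [e hsz hc]]]] := IH (ltnW hj).
  have [X2 [M2 [V2 [z2 [f1 f2 b1 b2 [t1 t2]]]]]] := move_dec (hmv _ hj) (kpos _ hj).
  have hpj := hp j hj.
  have : X ++ z :: V == X2 ++ x j.+1 :: M2 ++ V2 by rewrite -e f1 b1.
  rewrite eqseq_cat; last by rewrite hsz t1 hpj.
  case/andP => /eqP eX /eqP [ez eV].
  exists (X2 ++ M2), z2, V2; split.
  - by rewrite f2 b2 -!catA.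
  - have := kpos _ hj; rewrite size_cat t1 t2 hpj; lia.
  - rewrite f2 b2 -catA catA.
    have := hc; rewrite e eX ez eV => hc'.
    have hc2 : cox_eq (@univ_matrix _) (X2 ++ x j.+1 :: M2 ++ V2)
      ((s ++ refl_word (rev V0 ++ rev M0) (x 0)) ++ rev (M2 ++ V2) ++ x j.+1 :: M2 ++ V2).
      by rewrite -catA.
    have := @step_lemma _ _ hu _ _ _ _ _ z2 hc2.
    by rewrite -!catA.
have [X [z [V [_ _ hc]]]] := claim q (ltnSn q).
exists (rev V0 ++ rev M0), (rev V), (x 0), z.
by rewrite {2}/refl_word revK.
Qed.
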